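(* Let $\mathcal M=(\mathbf M^{(\lambda)})_{\lambda>0}$, $\mathbf M^{(\lambda)}=(M^{(\lambda)}_p)_{p\in\mathbb N_0}$, be a weight matrix in dimension $d=1$ such that for every $\lambda>0$: $(M^{(\lambda)}_p)^2\le M^{(\lambda)}_{p-1}M^{(\lambda)}_{p+1}$ for all $p\in\mathbb N$ and $\lim_{p\to\infty}(M^{(\lambda)}_p)^{1/p}=+\infty$. Assume moreover that $\mu^{(\lambda)}_p:=M^{(\lambda)}_p/M^{(\lambda)}_{p-1}$ ($p\in\mathbb N$), $\mu^{(\lambda)}_0:=1$, satisfy $\mu^{(\lambda)}_p\le\mu^{(\kappa)}_p$ for all $p$ whenever $0<\lambda\le\kappa$. Then the following are equivalent: (a) for every $j\in\mathbb N$ there exists $\ell\in\mathbb N$, $\ell>j$, such that $\sum_{k=1}^{\infty}e^{\omega_{\mathbf M^{(1/j)}}(jk^{1/2})-\omega_{\mathbf M^{(1/\ell)}}(\ell k^{1/2})}<+\infty$; (b) for every $\lambda>0$ there exist $0<\kappa<\lambda$ and $A\ge1$ such that $M^{(\kappa)}_{p+1}\le A^{p+1}M^{(\lambda)}_p$ for all $p\in\mathbb N$.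
   Context: A weight matrix (here $d=1$) is a family $(\mathbf M^{(\lambda)})_{\lambda>0}$ of sequences of positive reals $(M^{(\lambda)}_p)_{p\in\mathbb N_0}$ with $M^{(\lambda)}_0=1$ and $M^{(\lambda)}_p\le M^{(\kappa)}_p$ for all $p$ whenever $0<\lambda\le\kappa$. The associated function of $\mathbf M=(M_p)$ is $\omega_{\mathbf M}(t)=\sup_{p\in\mathbb N_0}\log\frac{|t|^p}{M_p}$ (with $0^0=1$). *)

(* Defs.v *)
From Stdlib Require Import Reals.
From Coquelicot Require Import Coquelicot.
Open Scope R_scope.

Definition weight_matrix (M : R -> nat -> R) : Prop :=
  (forall lam, 0 < lam -> M lam 0%nat = 1) /\
  (forall lam p, 0 < lam -> 0 < M lam p) /\
  (forall lam kap p, 0 < lam -> lam <= kap -> M lam p <= M kap p).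

(* Associated function omega_M(t) = sup_p log(|t|^p / M_p) = log (sup_p |t|^p / M_p)
   (with 0^0 = 1, as Stdlib's pow). *)
Definition omega (M : nat -> R) (t : R) : R :=
  ln (real (Lub_Rbar (fun x => exists p : nat, x = Rabs t ^ p / M p))).

Definition mu (M : nat -> R) (p : nat) : R :=
  match p with 0%nat => 1 | S q => M p / M q end.

(* Main.v *)
Require Import Defs.
From Stdlib Require Import Reals Lra Lia.
From Coquelicot Require Import Coquelicot.
Open Scope R_scope.

Definition Om (N : nat -> R) (t : R) : R :=
  real (Lub_Rbar (fun x => exists p : nat, x = Rabs t ^ p / N p)).

Definition good (N : nat -> R) : Prop :=
  N 0%nat = 1 /\ (forall p, 0 < N p) /\
  forall t, exists B, forall p, Rabs t ^ p / N p <= B.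

Lemma Om_spec N t : good N ->
  (forall p, Rabs t ^ p / N p <= Om N t) /\
  (forall B, (forall p, Rabs t ^ p / N p <= B) -> Om N t <= B).
Proof.
  intros [H0 [Hp Hb]]. destruct (Hb t) as [B HB].
  unfold Om. destruct (Lub_Rbar_correct (fun x => exists p : nat, x = Rabs t ^ p / N p)) as [Hub Hlub].
  set (E := fun x => exists p : nat, x = Rabs t ^ p / N p) in *.
  assert (HB' : Rbar_le (Lub_Rbar E) (Finite B)).
  { apply Hlub. intros x [p ->]. simpl. apply HB. }
  assert (H1 : Rbar_le (Finite (Rabs t ^ 0 / N 0%nat)) (Lub_Rbar E)).
  { apply Hub. exists 0%nat. reflexivity. }
  destruct (Lub_Rbar E) as [l| |] eqn:El; simpl in *; try contradiction.
  split.
  - intros p. assert (Hx := Hub (Rabs t ^ p / N p) (ex_intro _ p eq_refl)).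
    try rewrite El in Hx. exact Hx.
  - intros B' HB2. apply (Hlub (Finite B')).
    intros x [p ->]. simpl. apply HB2.
Qed.

Lemma Om_ge1 N t : good N -> 1 <= Om N t.
Proof.
  intros G. destruct (Om_spec N t G) as [H _]. specialize (H 0%nat).
  destruct G as [H0 _]. rewrite H0 in H. simpl in H. lra.
Qed.

Lemma Om_term N t p : good N -> Rabs t ^ p / N p <= Om N t.
Proof. intros G. apply (Om_spec N t G). Qed.

Lemma Om_lub N t B : good N -> (forall p, Rabs t ^ p / N p <= B) -> Om N t <= B.
Proof. intros G. apply (Om_spec N t G). Qed.

Lemma Om_mono_t N t t' : good N -> 0 <= t -> t <= t' -> Om N t <= Om N t'.
Proof.
  intros G Ht Htt. apply Om_lub; auto. intros p.
  eapply Rle_trans; [| apply (Om_term N t' p G)].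
  destruct G as [_ [Hp _]]. unfold Rdiv. apply Rmult_le_compat_r.
  - left. apply Rinv_0_lt_compat, Hp.
  - apply pow_incr. split; [apply Rabs_pos|]. rewrite !Rabs_right; lra.
Qed.

Lemma Om_anti N N' t : good N -> good N' -> (forall p, N p <= N' p) -> Om N' t <= Om N t.
Proof.
  intros G G' HN. apply Om_lub; auto. intros p.
  eapply Rle_trans; [| apply (Om_term N t p G)].
  destruct G as [_ [Hp _]]. unfold Rdiv. apply Rmult_le_compat_l.
  - apply pow_le, Rabs_pos.
  - apply Rinv_le_contravar; auto.
Qed.

Lemma omega_Om N t : good N -> Defs.omega N t = ln (Om N t).
Proof. reflexivity. Qed.

Lemma bdd_from_eventually (u : nat -> R) : forall N c,
  (forall p, (N <= p)%nat -> u p <= c) -> exists B, forall p, u p <= B.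
Proof.
  induction N as [|N IH]; intros c H.
  - exists c. intros p. apply H. lia.
  - apply (IH (Rmax c (u N))). intros p Hp.
    destruct (Nat.eq_dec p N) as [->|Hne].
    + apply Rmax_r.
    + eapply Rle_trans; [apply H; lia| apply Rmax_l].
Qed.

Lemma Rpower_inv_pow x p : 0 < x -> (1 <= p)%nat ->
  Rpower (Rpower x (/ INR p)) (INR p) = x.
Proof.
  intros Hx Hp. rewrite Rpower_mult. rewrite Rinv_l.
  - apply Rpower_1; auto.
  - apply not_0_INR. lia.
Qed.

Lemma good_of (N : nat -> R) : N 0%nat = 1 -> (forall p, 0 < N p) ->
  is_lim_seq (fun p : nat => Rpower (N p) (/ INR p)) p_infty -> good N.
Proof.
  intros H0 Hp Hl. split; [auto| split; [auto|]].
  intros t. apply is_lim_seq_spec in Hl. destruct (Hl (Rabs t + 1)) as [K HK].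
  apply (bdd_from_eventually _ (S K) 1). intros p Hpk.
  assert (Hp1 : (1 <= p)%nat) by lia.
  specialize (HK p ltac:(lia)). simpl in HK.
  rewrite <- (Rpower_inv_pow (N p) p (Hp p) Hp1).
  rewrite Rpower_pow by (unfold Rpower; apply exp_pos).
  assert (Hpos : 0 < Rpower (N p) (/ INR p)) by (unfold Rpower; apply exp_pos).
  assert (Ha : Rabs t ^ p <= Rpower (N p) (/ INR p) ^ p).
  { apply pow_incr. split; [apply Rabs_pos| lra]. }
  assert (0 < Rpower (N p) (/ INR p) ^ p) by (apply pow_lt; auto).
  unfold Rdiv. apply (Rmult_le_reg_r (Rpower (N p) (/ INR p) ^ p)); auto.
  rewrite Rmult_assoc, Rinv_l by lra. lra.
Qed.

Lemma frac_aux a b s : 0 < a -> 0 < b -> a / b <= s -> / b <= s / a.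
Proof.
  intros Ha Hb H. apply (Rmult_le_compat_r (/ a)) in H; [|left; apply Rinv_0_lt_compat; auto].
  replace (a / b * / a) with (/ b) in H by (field; lra). exact H.
Qed.

Lemma frac_aux2 a b s : 0 < a -> 0 < b -> s <= a / b -> s / a <= / b.
Proof.
  intros Ha Hb H. apply (Rmult_le_compat_r (/ a)) in H; [|left; apply Rinv_0_lt_compat; auto].
  replace (a / b * / a) with (/ b) in H by (field; lra). exact H.
Qed.

Lemma peak (r : nat -> R) m : (forall q, (q < m)%nat -> r q <= r (S q)) ->
  (forall q, (m <= q)%nat -> r (S q) <= r q) -> forall q, r q <= r m.
Proof.
  intros Hu Hd q.
  assert (A1 : forall d q, (q + d = m)%nat -> r q <= r m).
  { induction d as [|d IH]; intros q' Hq.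
    - replace q' with m by lia. lra.
    - eapply Rle_trans; [apply Hu; lia| apply IH; lia]. }
  assert (A2 : forall d, r (m + d)%nat <= r m).
  { induction d as [|d IH].
    - rewrite Nat.add_0_r. lra.
    - eapply Rle_trans; [| apply IH]. replace (m + S d)%nat with (S (m + d)) by lia.
      apply Hd. lia. }
  destruct (Compare_dec.le_lt_dec q m) as [H|H].
  - apply (A1 (m - q)%nat). lia.
  - replace q with (m + (q - m))%nat by lia. apply A2.
Qed.

Section LC.
Variable N : nat -> R.
Hypothesis Npos : forall p, 0 < N p.
Hypothesis N0 : N 0%nat = 1.
Hypothesis Nlc : forall p : nat, (1 <= p)%nat -> N p ^ 2 <= N (p - 1)%nat * N (p + 1)%nat.

Lemma mu_step q : N (S q) / N q <= N (S (S q)) / N (S q).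
Proof.
  specialize (Nlc (S q) ltac:(lia)).
  replace (S q - 1)%nat with q in Nlc by lia. replace (S q + 1)%nat with (S (S q)) in Nlc by lia.
  pose proof (Npos q). pose proof (Npos (S q)). pose proof (Npos (S (S q))).
  apply (Rmult_le_reg_r (N q * N (S q))). { apply Rmult_lt_0_compat; auto. }
  replace (N (S q) / N q * (N q * N (S q))) with (N (S q) ^ 2) by (field; lra).
  replace (N (S (S q)) / N (S q) * (N q * N (S q))) with (N q * N (S (S q))) by (field; lra).
  exact Nlc.
Qed.

Lemma mu_mono q d : N (S q) / N q <= N (S (q + d)) / N (q + d).
Proof.
  induction d as [|d IH].
  - rewrite Nat.add_0_r. lra.
  - eapply Rle_trans; [apply IH|]. replace (q + S d)%nat with (S (q + d)) by lia. apply mu_step.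
Qed.

Lemma N_ge_pow p : N 1%nat ^ p <= N p.
Proof.
  induction p as [|p IH].
  - simpl. rewrite N0. lra.
  - pose proof (mu_mono 0 p) as H. simpl in H. rewrite N0 in H.
    replace (N 1%nat / 1) with (N 1%nat) in H by field.
    pose proof (Npos p). pose proof (Npos 1).
    simpl. apply (Rmult_le_compat_r (N p)) in H; [|lra].
    replace (N (S p) / N p * N p) with (N (S p)) in H by (field; lra).
    eapply Rle_trans; [| exact H]. apply Rmult_le_compat_l; lra.
Qed.

Lemma attain p q : let s := N (S p) / N p in s ^ q / N q <= s ^ (S p) / N (S p).
Proof.
  intros s. assert (Hs : 0 < s) by (unfold s, Rdiv; apply Rmult_lt_0_compat; [|apply Rinv_0_lt_compat]; auto).
  apply (peak (fun q => s ^ q / N q)).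
  - intros q' Hq. simpl. replace (s * s ^ q' / N (S q')) with (s ^ q' * (s / N (S q'))) by (unfold Rdiv; ring).
    unfold Rdiv at 1. apply Rmult_le_compat_l; [apply pow_le; lra|]. apply frac_aux; auto.
    pose proof (mu_mono q' (p - q')) as H. replace (q' + (p - q'))%nat with p in H by lia. exact H.
  - intros q' Hq. simpl. replace (s * s ^ q' / N (S q')) with (s ^ q' * (s / N (S q'))) by (unfold Rdiv; ring).
    unfold Rdiv at 1. apply Rmult_le_compat_l; [apply pow_le; lra|]. apply frac_aux2; auto.
    pose proof (mu_mono p (q' - p)) as H. replace (p + (q' - p))%nat with q' in H by lia. exact H.
Qed.
End LC.

Lemma nat_gt x : exists n : nat, x < INR n.
Proof.
  destruct (nfloor_ex (Rmax 0 x) (Rmax_l _ _)) as [n Hn].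
  exists (S n). rewrite S_INR. pose proof (Rmax_r 0 x). lra.
Qed.

Lemma sum_n_nonneg (a : nat -> R) : (forall n, 0 <= a n) -> forall n, 0 <= sum_n a n.
Proof.
  intros H n. induction n as [|n IH].
  - rewrite sum_O. auto.
  - rewrite sum_Sn. change (plus (sum_n a n) (a (S n))) with (sum_n a n + a (S n)).
    pose proof (H (S n)). lra.
Qed.

Lemma ex_series_inv_sq : ex_series (fun n : nat => / (INR n + 1) ^ 2).
Proof.
  assert (Hb : forall n, sum_n (fun n : nat => / (INR n + 1) ^ 2) n <= 2 - / (INR n + 1)).
  { induction n as [|n IH].
    - rewrite sum_O. simpl. lra.
    - rewrite sum_Sn. change (plus ?x ?y) with (x + y). rewrite S_INR.
      pose proof (pos_INR n).
      assert (/ (INR n + 1 + 1) ^ 2 <= / (INR n + 1) - / (INR n + 1 + 1)).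
      { replace (/ (INR n + 1) - / (INR n + 1 + 1)) with (/ ((INR n + 1) * (INR n + 1 + 1))) by (field; lra).
        apply Rinv_le_contravar. { apply Rmult_lt_0_compat; lra. } simpl. nra. }
      lra. }
  destruct (ex_finite_lim_seq_incr (sum_n (fun n : nat => / (INR n + 1) ^ 2)) 2) as [l Hl].
  - intros n. rewrite sum_Sn. change (plus ?x ?y) with (x + y).
    assert (0 < / (INR (S n) + 1) ^ 2). { apply Rinv_0_lt_compat, pow_lt. pose proof (pos_INR (S n)). lra. }
    lra.
  - intros n. eapply Rle_trans; [apply Hb|]. assert (0 < / (INR n + 1)) by (apply Rinv_0_lt_compat; pose proof (pos_INR n); lra). lra.
  - exists l. exact Hl.
Qed.

Lemma step_ineq (N M' : nat -> R) A : good N -> good M' -> 0 < A ->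
  (forall p : nat, (1 <= p)%nat -> N (p + 1)%nat <= A ^ (p + 1) * M' p) ->
  exists C, 0 < C /\ forall t, 0 <= t -> t * Om M' t <= C * Om N (A * t).
Proof.
  intros GN GM HA H. exists (Rmax 1 (N 1%nat / A)). split.
  { eapply Rlt_le_trans; [|apply Rmax_l]. lra. }
  intros t Ht. destruct Ht as [Ht|Ht]; [| subst t; rewrite Rmult_0_l;
    apply Rmult_le_pos; [eapply Rle_trans; [|apply Rmax_l]; lra| pose proof (Om_ge1 N (A*0) GN); lra]].
  assert (Hom : Om M' t <= Rmax 1 (N 1%nat / A) * Om N (A * t) / t).
  { apply Om_lub; auto. intros p. rewrite Rabs_right by lra.
    pose proof (Om_term N (A * t) (p + 1) GN) as Hterm.
    pose proof GN as [N0 [Np _]]. pose proof GM as [M0 [Mp _]].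
    rewrite Rabs_right in Hterm by (apply Rle_ge, Rmult_le_pos; lra).
    pose proof (Om_ge1 N (A * t) GN).
    apply (Rmult_le_reg_r t); auto.
    replace (Rmax 1 (N 1%nat / A) * Om N (A * t) / t * t) with (Rmax 1 (N 1%nat / A) * Om N (A * t)) by (field; lra).
    destruct p as [|p].
    - simpl. rewrite M0. pose proof (Om_term N (A * t) 1 GN) as H1. simpl in H1.
      rewrite Rmult_1_r, Rabs_right in H1 by (apply Rle_ge, Rmult_le_pos; lra).
      replace (1 / 1 * t) with (A * t / N 1%nat * (N 1%nat / A)) by (pose proof (Np 1%nat); field; repeat split; lra).
      pose proof (Np 1%nat). rewrite Rmult_comm. apply Rmult_le_compat; try lra;
      try apply Rmax_r; unfold Rdiv; repeat apply Rmult_le_pos; try lra; left; apply Rinv_0_lt_compat; auto.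
    - specialize (H (S p) ltac:(lia)).
      assert (t ^ S p / M' (S p) * t <= (A * t) ^ (S p + 1) / N (S p + 1)%nat).
      { rewrite Rpow_mult_distr. pose proof (Np (S p + 1)%nat). pose proof (Mp (S p)).
        assert (0 < A ^ (S p + 1)) by (apply pow_lt; auto).
        replace (t ^ S p / M' (S p) * t) with (t ^ (S p + 1) / M' (S p)) by (rewrite pow_add; field; lra).
        replace (A ^ (S p + 1) * t ^ (S p + 1) / N (S p + 1)%nat) with (t ^ (S p + 1) * (A ^ (S p + 1) / N (S p + 1)%nat)) by (unfold Rdiv; ring).
        unfold Rdiv. apply Rmult_le_compat_l; [apply pow_le; lra|].
        apply (Rmult_le_reg_r (M' (S p) * N (S p + 1)%nat)). { apply Rmult_lt_0_compat; auto. }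
        replace (/ M' (S p) * (M' (S p) * N (S p + 1)%nat)) with (N (S p + 1)%nat) by (field; lra).
        replace (A ^ (S p + 1) * / N (S p + 1)%nat * (M' (S p) * N (S p + 1)%nat)) with (A ^ (S p + 1) * M' (S p)) by (field; lra).
        exact H. }
      eapply Rle_trans; [exact H1|]. eapply Rle_trans; [exact Hterm|].
      rewrite <- (Rmult_1_l (Om N (A * t))) at 1. apply Rmult_le_compat_r; [lra| apply Rmax_l]. }
  apply (Rmult_le_compat_l t) in Hom; [|lra].
  replace (t * (Rmax 1 (N 1%nat / A) * Om N (A * t) / t)) with (Rmax 1 (N 1%nat / A) * Om N (A * t)) in Hom by (field; lra).
  exact Hom.
Qed.

Lemma exp_omega_diff N N' t t' : good N -> good N' ->
  exp (omega N t - omega N' t') = Om N t / Om N' t'.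
Proof.
  intros G G'. unfold omega. fold (Om N t). fold (Om N' t').
  pose proof (Om_ge1 N t G). pose proof (Om_ge1 N' t' G').
  rewrite <- ln_div by lra. apply exp_ln. unfold Rdiv. apply Rmult_lt_0_compat; [lra|].
  apply Rinv_0_lt_compat. lra.
Qed.

Lemma b_to_a (M : R -> nat -> R) :
  (forall lam, 0 < lam -> good (M lam)) ->
  (forall lam kap p, 0 < lam -> lam <= kap -> M lam p <= M kap p) ->
  (forall lam, 0 < lam ->
      exists kap A, 0 < kap /\ kap < lam /\ 1 <= A /\
        forall p : nat, (1 <= p)%nat -> M kap (p + 1)%nat <= A ^ (p + 1) * M lam p) ->
  (forall j : nat, (1 <= j)%nat ->
      exists l : nat, (j < l)%nat /\
        ex_series (fun n : nat =>
          exp (omega (M (/ INR j)) (INR j * sqrt (INR (S n)))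
               - omega (M (/ INR l)) (INR l * sqrt (INR (S n)))))).
Proof.
  intros G Mmono Hb j Hj.
  assert (Hjr : 1 <= INR j) by (apply (le_INR 1); lia).
  set (lam := / INR j).
  assert (Hlam : 0 < lam) by (apply Rinv_0_lt_compat; lra).
  assert (Iter : forall m, exists kap B C, 0 < kap /\ kap <= lam /\ 0 < B /\ 0 < C /\
     forall t, 0 <= t -> t ^ m * Om (M lam) t <= C * Om (M kap) (B * t)).
  { induction m as [|m IH].
    - exists lam, 1, 1. repeat split; try lra. intros t _. simpl. rewrite !Rmult_1_l. lra.
    - destruct IH as [kap [B [C [Hk [Hkl [HB [HC HI]]]]]]].
      destruct (Hb kap Hk) as [kap' [A [Hk' [Hkk [HA HAi]]]]].
      destruct (step_ineq (M kap') (M kap) A (G kap' Hk') (G kap Hk) ltac:(lra) HAi) as [C' [HC' HS]].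
      exists kap', (A * B), (C / B * C'). repeat split; try lra.
      + apply Rmult_lt_0_compat; lra.
      + apply Rmult_lt_0_compat; [|lra]. unfold Rdiv. apply Rmult_lt_0_compat; [lra|]. apply Rinv_0_lt_compat; lra.
      + intros t Ht. simpl. rewrite Rmult_assoc.
        eapply Rle_trans. { apply Rmult_le_compat_l; [lra| apply HI; auto]. }
        replace (t * (C * Om (M kap) (B * t))) with (C / B * ((B * t) * Om (M kap) (B * t))) by (field; lra).
        rewrite (Rmult_assoc (C / B)). apply Rmult_le_compat_l.
        { unfold Rdiv. apply Rmult_le_pos; [lra| left; apply Rinv_0_lt_compat; lra]. }
        rewrite (Rmult_assoc A). apply HS. apply Rmult_le_pos; lra. }
  destruct (Iter 4%nat) as [kap [B [C [Hk [Hkl [HB [HC HI]]]]]]].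
  destruct (nat_gt (INR j + B * INR j + / kap)) as [l Hl].
  assert (Hik : 0 < / kap) by (apply Rinv_0_lt_compat; lra).
  assert (Hlj : (j < l)%nat) by (apply INR_lt; nra).
  assert (HBj : 0 <= B * INR j) by nra.
  assert (Hlr : 0 < INR l) by nra.
  assert (Hlk : / INR l <= kap).
  { rewrite <- (Rinv_inv kap). apply Rinv_le_contravar; lra. }
  assert (Hil : 0 < / INR l) by (apply Rinv_0_lt_compat; lra).
  exists l. split; auto.
  apply (@ex_series_le R_AbsRing R_CompleteNormedModule _ (fun n => C * / (INR n + 1) ^ 2)).
  2:{ apply (ex_series_ext (fun n => scal C (/ (INR n + 1) ^ 2))); [reflexivity|].
      apply (@ex_series_scal_l R_AbsRing R_NormedModule C), ex_series_inv_sq. }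
  intros n. rewrite exp_omega_diff by (apply G; auto).
  rewrite S_INR. set (k := INR n + 1).
  assert (Hk0 : 0 < k) by (unfold k; pose proof (pos_INR n); lra).
  set (u := INR j * sqrt k). set (v := INR l * sqrt k).
  assert (Hsk : 0 < sqrt k) by (apply sqrt_lt_R0; lra).
  assert (Hu : 0 < u) by (unfold u; nra).
  set (a := Om (M lam) u). set (b := Om (M (/ INR l)) v).
  assert (Ha : 1 <= a) by (apply Om_ge1, G; auto).
  assert (Hb1 : 1 <= b) by (apply Om_ge1, G; auto).
  change (norm (a / b)) with (Rabs (a / b)).
  rewrite Rabs_right by (apply Rle_ge; unfold Rdiv; apply Rmult_le_pos; [lra| left; apply Rinv_0_lt_compat; lra]).
  assert (H1 : u ^ 4 * a <= C * b).
  { eapply Rle_trans; [apply HI; lra|]. apply Rmult_le_compat_l; [lra|].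
    eapply Rle_trans.
    - apply (Om_mono_t (M kap) (B * u) v (G kap Hk)); [nra|]. unfold u, v. nra.
    - apply Om_anti; [apply G; auto| apply G; auto| intros p; apply Mmono; auto]. }
  assert (H2 : k ^ 2 <= u ^ 4).
  { unfold u. replace ((INR j * sqrt k) ^ 4) with (INR j ^ 4 * ((sqrt k * sqrt k) * (sqrt k * sqrt k))) by ring.
    rewrite sqrt_sqrt by lra. assert (1 <= INR j ^ 4) by (apply pow_R1_Rle; lra).
    assert (0 < k ^ 2) by (apply pow_lt; lra). simpl. nra. }
  assert (0 < k ^ 2) by (apply pow_lt; lra).
  apply (Rmult_le_reg_r (b * k ^ 2)). { apply Rmult_lt_0_compat; lra. }
  replace (a / b * (b * k ^ 2)) with (a * k ^ 2) by (field; lra).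
  replace (C * / k ^ 2 * (b * k ^ 2)) with (C * b) by (field; lra).
  nra.
Qed.

Lemma sum_lower (a : nat -> R) Sm K b : (forall n, 0 <= a n) -> (forall n, sum_n a n <= Sm) ->
  (forall i, (1 <= i <= K)%nat -> b <= a (K + i)%nat) -> INR K * b <= Sm.
Proof.
  intros Ha HS Hb.
  assert (H : forall i, (i <= K)%nat -> INR i * b <= sum_n a (K + i)).
  { induction i as [|i IH]; intros Hi.
    - simpl. rewrite Rmult_0_l. apply sum_n_nonneg; auto.
    - rewrite S_INR. replace (K + S i)%nat with (S (K + i)) by lia.
      rewrite sum_Sn. change (plus ?x ?y) with (x + y).
      specialize (IH ltac:(lia)). specialize (Hb (S i) ltac:(lia)).
      replace (S (K + i)) with (K + S i)%nat by lia. lra. }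
  eapply Rle_trans; [apply (H K); lia| apply HS].
Qed.

Lemma alg1 t T Q R W sg L s p : 1 <= t -> 0 < T -> 0 < Q -> 0 < R -> 0 < L -> 1 <= W ->
  T = t ^ p -> s = L * t ->
  t ^ 2 * (T / Q) <= sg * W -> R * W <= s ^ (S p) -> R <= sg * L ^ (S p) * Q.
Proof.
  intros Ht HT HQ HR HL HW ET Es H1 H2.
  rewrite Es, Rpow_mult_distr in H2. simpl in H2. rewrite <- ET in H2.
  apply (Rmult_le_compat_l R) in H1; [|lra].
  assert (H3 : R * (t ^ 2 * (T / Q)) <= sg * (L ^ p * L) * (T * t)).
  { eapply Rle_trans; [exact H1|]. replace (R * (sg * W)) with (sg * (R * W)) by ring.
    destruct (Rle_lt_dec 0 sg) as [Hs|Hs].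
    - eapply Rle_trans; [apply Rmult_le_compat_l; [exact Hs| exact H2]|]. simpl. right; ring.
    - exfalso. assert (0 <= R * (t ^ 2 * (T / Q))).
      { apply Rmult_le_pos; [lra|]. apply Rmult_le_pos; [apply pow_le; lra|].
        unfold Rdiv; apply Rmult_le_pos; [lra| left; apply Rinv_0_lt_compat; lra]. }
      assert (0 < R * W) by nra. assert (R * (sg * W) <= 0) by nra.
      assert (0 < R * (t ^ 2 * (T / Q))).
      { apply Rmult_lt_0_compat; [lra|]. apply Rmult_lt_0_compat; [apply pow_lt; lra|].
        unfold Rdiv; apply Rmult_lt_0_compat; [lra| apply Rinv_0_lt_compat; lra]. }
      lra. }
  assert (H4 : R * t <= sg * L ^ (S p) * Q).
  { apply (Rmult_le_reg_r (T * t / Q)). { unfold Rdiv. apply Rmult_lt_0_compat; [nra| apply Rinv_0_lt_compat; lra]. }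
    replace (R * t * (T * t / Q)) with (R * (t ^ 2 * (T / Q))) by (field; lra).
    replace (sg * L ^ S p * Q * (T * t / Q)) with (sg * (L ^ p * L) * (T * t)) by (simpl; field; lra).
    exact H3. }
  nra.
Qed.

Lemma frac_le x y x' y' : 0 <= x -> x <= x' -> 0 < y' -> y' <= y -> x / y <= x' / y'.
Proof.
  intros. unfold Rdiv. apply Rmult_le_compat; try lra.
  - left; apply Rinv_0_lt_compat; lra.
  - apply Rinv_le_contravar; lra.
Qed.

Lemma a_to_b (M : R -> nat -> R) :
  (forall lam, 0 < lam -> good (M lam)) ->
  (forall lam kap p, 0 < lam -> lam <= kap -> M lam p <= M kap p) ->
  (forall lam, 0 < lam -> forall p : nat, (1 <= p)%nat ->
     M lam p ^ 2 <= M lam (p - 1)%nat * M lam (p + 1)%nat) ->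
  (forall j : nat, (1 <= j)%nat ->
      exists l : nat, (j < l)%nat /\
        ex_series (fun n : nat =>
          exp (omega (M (/ INR j)) (INR j * sqrt (INR (S n)))
               - omega (M (/ INR l)) (INR l * sqrt (INR (S n)))))) ->
  (forall lam, 0 < lam ->
      exists kap A, 0 < kap /\ kap < lam /\ 1 <= A /\
        forall p : nat, (1 <= p)%nat -> M kap (p + 1)%nat <= A ^ (p + 1) * M lam p).
Proof.
  intros G Mmono LC Ha lam Hlam.
  destruct (nat_gt (/ lam)) as [n Hn].
  set (j := S n).
  assert (Hj1 : (1 <= j)%nat) by (unfold j; lia).
  assert (Hjr : 1 <= INR j) by (apply (le_INR 1); lia).
  assert (Hjn : INR n <= INR j) by (apply le_INR; unfold j; lia).
  assert (Hilam : 0 < / lam) by (apply Rinv_0_lt_compat; lra).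
  assert (Hjl : / INR j <= lam). { rewrite <- (Rinv_inv lam). apply Rinv_le_contravar; lra. }
  destruct (Ha j Hj1) as [l [Hjl' Hser]].
  assert (Hlr : INR j < INR l) by (apply lt_INR; auto).
  assert (Hpj : 0 < / INR j) by (apply Rinv_0_lt_compat; lra).
  assert (Hpl : 0 < / INR l) by (apply Rinv_0_lt_compat; lra).
  set (Mj := M (/ INR j)) in *. set (N := M (/ INR l)) in *.
  assert (GJ : good Mj) by (apply G; auto).
  assert (GN : good N) by (apply G; auto).
  set (a := fun n : nat => Om Mj (INR j * sqrt (INR (S n))) / Om N (INR l * sqrt (INR (S n)))).
  assert (Hapos : forall n, 0 <= a n).
  { intros m. unfold a. pose proof (Om_ge1 Mj (INR j * sqrt (INR (S m))) GJ).
    pose proof (Om_ge1 N (INR l * sqrt (INR (S m))) GN).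
    unfold Rdiv. apply Rmult_le_pos; [lra| left; apply Rinv_0_lt_compat; lra]. }
  assert (Hex : ex_series a).
  { eapply ex_series_ext; [| exact Hser]. intros m. simpl. apply exp_omega_diff; auto. }
  set (Sm := Series a).
  assert (HS : forall n, sum_n a n <= Sm).
  { apply is_lim_seq_incr_compare.
    - apply Series_correct in Hex. exact Hex.
    - intros m. rewrite sum_Sn. change (plus ?x ?y) with (x + y). pose proof (Hapos (S m)). lra. }
  assert (HS0 : 0 <= Sm) by (eapply Rle_trans; [apply sum_n_nonneg; auto| apply (HS 0%nat)]).
  assert (HK : forall K, (1 <= K)%nat ->
    INR K * (Om Mj (INR j * sqrt (INR K)) / Om N (INR l * sqrt (3 * INR K))) <= Sm).
  { intros K HK1. apply (sum_lower a Sm K); auto. intros i Hi. unfold a.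
    assert (HKr : 1 <= INR K) by (apply (le_INR 1); lia).
    assert (HiK : INR i <= INR K) by (apply le_INR; lia).
    pose proof (pos_INR i).
    apply frac_le.
    - pose proof (Om_ge1 Mj (INR j * sqrt (INR K)) GJ). lra.
    - apply Om_mono_t; auto.
      + apply Rmult_le_pos; [lra| apply sqrt_pos].
      + apply Rmult_le_compat_l; [lra|]. apply sqrt_le_1_alt.
        rewrite S_INR, plus_INR. lra.
    - pose proof (Om_ge1 N (INR l * sqrt (INR (S (K + i)))) GN). lra.
    - apply Om_mono_t; auto.
      + apply Rmult_le_pos; [lra| apply sqrt_pos].
      + apply Rmult_le_compat_l; [lra|]. apply sqrt_le_1_alt.
        rewrite S_INR, plus_INR. lra. }
  assert (Ht : forall t, 1 <= t -> t ^ 2 * Om Mj (INR j * t) <= Sm * Om N (3 * INR l * t)).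
  { intros t Ht1. assert (Ht2 : 1 <= t ^ 2) by (apply pow_R1_Rle; lra).
    destruct (nfloor_ex (t ^ 2)) as [m [Hm1 Hm2]]; [lra|].
    specialize (HK (S m) ltac:(lia)). rewrite S_INR in HK.
    set (K := INR m + 1) in *.
    assert (HsK : t <= sqrt K).
    { rewrite <- (sqrt_pow2 t) by lra. apply sqrt_le_1_alt. lra. }
    assert (Hs3 : sqrt (3 * K) <= 3 * t).
    { assert (HK2 : K <= 2 * t ^ 2) by (unfold K; lra). rewrite <- (sqrt_pow2 (3 * t)) by lra. apply sqrt_le_1_alt. replace ((3 * t) ^ 2) with (9 * t ^ 2) by ring. lra. }
    pose proof (Om_ge1 N (INR l * sqrt (3 * K)) GN) as HY.
    set (X := Om Mj (INR j * sqrt K)) in *. set (Y := Om N (INR l * sqrt (3 * K))) in *.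
    assert (H1 : K * X <= Sm * Y).
    { apply (Rmult_le_compat_r Y) in HK; [|lra].
      replace (K * (X / Y) * Y) with (K * X) in HK by (field; lra). exact HK. }
    assert (H2 : Om Mj (INR j * t) <= X).
    { apply Om_mono_t; auto; nra. }
    assert (H3 : Y <= Om N (3 * INR l * t)).
    { apply Om_mono_t; auto.
      - apply Rmult_le_pos; [lra| apply sqrt_pos].
      - assert (0 <= INR l) by lra. replace (3 * INR l * t) with (INR l * (3 * t)) by ring.
        apply Rmult_le_compat_l; auto. }
    pose proof (Om_ge1 Mj (INR j * t) GJ).
    apply (Rle_trans _ (K * X)).
    { assert (0 <= t ^ 2) by (apply pow_le; lra). apply Rmult_le_compat; lra. }
    - eapply Rle_trans; [exact H1|]. apply Rmult_le_compat_l; auto. }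
  pose proof GJ as [Mj0 [Mjp _]]. pose proof GN as [N0 [Np _]].
  set (L := 3 * INR l).
  assert (HL : 1 <= L) by (unfold L; lra).
  set (Z := Rmax 1 (/ Mj 1%nat)).
  set (X1 := Rmax 1 Sm).
  assert (HZ : 1 <= Z) by apply Rmax_l.
  assert (HX1 : 1 <= X1) by apply Rmax_l.
  exists (/ INR l), (X1 * L * Z). repeat split; auto.
  { eapply Rlt_le_trans; [| exact Hjl]. apply Rinv_lt_contravar; nra. }
  { assert (1 <= X1 * L) by nra. nra. }
  intros p Hp.
  apply Rle_trans with ((X1 * L * Z) ^ (p + 1) * Mj p).
  2:{ apply Rmult_le_compat_l; [apply pow_le; assert (1 <= X1 * L) by nra; nra|]. apply Mmono; auto. }
  rewrite Nat.add_1_r. rewrite !Rpow_mult_distr.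
  set (s := N (S p) / N p).
  assert (Hs : 0 < s) by (unfold s, Rdiv; apply Rmult_lt_0_compat; [|apply Rinv_0_lt_compat]; auto).
  assert (Hatt : N (S p) * Om N s <= s ^ (S p)).
  { assert (Om N s <= s ^ S p / N (S p)).
    { apply Om_lub; auto. intros q. rewrite Rabs_right by lra.
      apply (attain N Np (LC (/ INR l) Hpl) p q). }
    pose proof (Np (S p)).
    apply (Rmult_le_compat_l (N (S p))) in H; [|lra].
    replace (N (S p) * (s ^ S p / N (S p))) with (s ^ S p) in H by (field; lra). exact H. }
  pose proof (Om_ge1 N s GN) as HW.
  pose proof (Np (S p)). pose proof (Mjp p).
  assert (HZp : 1 <= Z ^ S p) by (apply pow_R1_Rle; auto).
  assert (HXp : 1 <= X1 ^ S p) by (apply pow_R1_Rle; auto).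
  assert (HLp : 1 <= L ^ S p) by (apply pow_R1_Rle; auto).
  destruct (Rle_lt_dec L s) as [HLs|HLs].
  - set (t := s / L).
    assert (Htt : 1 <= t).
    { unfold t. apply (Rmult_le_reg_r L); [lra|]. replace (s / L * L) with s by (field; lra). lra. }
    specialize (Ht t Htt). replace (3 * INR l * t) with s in Ht by (fold L; unfold t; field; lra).
    assert (Hjt : t ^ p / Mj p <= Om Mj (INR j * t)).
    { eapply Rle_trans; [| apply (Om_term Mj (INR j * t) p GJ)].
      rewrite Rabs_right by nra. unfold Rdiv. apply Rmult_le_compat_r; [left; apply Rinv_0_lt_compat; auto|].
      apply pow_incr. nra. }
    assert (Hc : t ^ 2 * (t ^ p / Mj p) <= Sm * Om N s).
    { eapply Rle_trans; [| exact Ht]. apply Rmult_le_compat_l; [apply pow_le; lra| exact Hjt]. }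
    assert (Hfin := alg1 t (t ^ p) (Mj p) (N (S p)) (Om N s) Sm L s p Htt
       ltac:(apply pow_lt; lra) ltac:(auto) ltac:(auto) ltac:(lra) HW eq_refl
       ltac:(unfold t; field; lra) Hc Hatt).
    eapply Rle_trans; [exact Hfin|].
    assert (Sm <= X1 ^ S p).
    { assert (HX1p : X1 ^ 1 <= X1 ^ S p) by (apply Rle_pow; auto; lia). rewrite pow_1 in HX1p. assert (HX1S : Sm <= X1) by apply Rmax_r. lra. }
    assert (0 < L ^ S p) by (apply pow_lt; lra).
    apply Rmult_le_compat_r; [lra|].
    rewrite <- (Rmult_1_r (Sm * L ^ S p)).
    apply Rmult_le_compat; try nra.
  - assert (H1 : N (S p) <= L ^ S p).
    { apply (Rle_trans _ (s ^ S p)); [| apply pow_incr; split; [lra| left; exact HLs]].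
      eapply Rle_trans; [| exact Hatt]. rewrite <- (Rmult_1_r (N (S p))) at 1.
      apply Rmult_le_compat_l; lra. }
    pose proof (N_ge_pow Mj Mjp Mj0 (LC (/ INR j) Hpj) p) as Hm.
    pose proof (Mjp 1%nat) as Hm1.
    assert (HZm : 1 <= Z * Mj 1%nat).
    { replace 1 with (/ Mj 1%nat * Mj 1%nat) at 1 by (field; lra).
      apply Rmult_le_compat_r; [lra| apply Rmax_r]. }
    assert (H2 : 1 <= Z ^ S p * Mj p).
    { apply Rle_trans with ((Z * Mj 1%nat) ^ p).
      - apply pow_R1_Rle; auto.
      - rewrite Rpow_mult_distr. apply Rmult_le_compat.
        + apply pow_le; lra.
        + apply pow_le; lra.
        + apply Rle_pow; auto; lia.
        + exact Hm. }
    eapply Rle_trans; [exact H1|].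
    replace (X1 ^ S p * L ^ S p * Z ^ S p * Mj p) with ((X1 ^ S p * L ^ S p) * (Z ^ S p * Mj p)) by ring.
    assert (L ^ S p <= X1 ^ S p * L ^ S p) by nra.
    assert (0 < L ^ S p) by lra.
    nra.
Qed.
Theorem proposition5p6 (M : R -> nat -> R) :
  weight_matrix M ->
  (forall lam, 0 < lam -> forall p : nat, (1 <= p)%nat ->
     M lam p ^ 2 <= M lam (p - 1)%nat * M lam (p + 1)%nat) ->
  (forall lam, 0 < lam ->
     is_lim_seq (fun p : nat => Rpower (M lam p) (/ INR p)) p_infty) ->
  (forall lam kap, 0 < lam -> lam <= kap -> forall p : nat, mu (M lam) p <= mu (M kap) p) ->
  ((forall j : nat, (1 <= j)%nat ->
      exists l : nat, (j < l)%nat /\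
        ex_series (fun n : nat =>
          exp (omega (M (/ INR j)) (INR j * sqrt (INR (S n)))
               - omega (M (/ INR l)) (INR l * sqrt (INR (S n))))))
   <->
   (forall lam, 0 < lam ->
      exists kap A, 0 < kap /\ kap < lam /\ 1 <= A /\
        forall p : nat, (1 <= p)%nat -> M kap (p + 1)%nat <= A ^ (p + 1) * M lam p)).
Proof.
  intros [W0 [Wp Wm]] LC Lim _.
  assert (G : forall lam, 0 < lam -> good (M lam)).
  { intros lam Hl. apply good_of; auto. }
  split.
  - apply a_to_b; auto.
  - apply b_to_a; auto.
Qed.
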